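(* Over all 3-periodics of $\mathcal{E}$, the incenter $X_1^\dagger$ of the focus-inversive triangle moves on the circle with center and radius \[C_1^\dagger=\left(c\left(-1+\rho^2\frac{-2a^2+b^2+2\delta}{2b^4}\right),0\right),\qquad R_1^\dagger=\rho^2\,\frac{-2\delta^2+b^4+(2a^2-b^2)\delta}{2ab^4}.\]
   Context: Let $a>b>0$ and let $\mathcal{E}$ be the ellipse $x^2/a^2+y^2/b^2=1$. Set $c=\sqrt{a^2-b^2}$, $\delta=\sqrt{a^4-a^2b^2+b^4}$, and let the foci be $f_1=(-c,0)$, $f_2=(c,0)$. A 3-periodic is a triangle $P_1P_2P_3$ with vertices on $\mathcal{E}$ such that at each vertex the normal to $\mathcal{E}$ bisects the angle formed by the two sides meeting at that vertex; these form a one-parameter family (one through every point of $\mathcal{E}$). Fix $\rho>0$; the focus-inversive triangle has vertices $P_i^\dagger=f_1+(\rho/d_{1,i})^2(P_i-f_1)$, $d_{1,i}=|P_i-f_1|$. *)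

(* Defs.v *)
From Stdlib Require Import Reals.
Open Scope R_scope.

Definition pt : Type := (R * R)%type.

Definition pdist (p q : pt) : R :=
  sqrt ((fst p - fst q) ^ 2 + (snd p - snd q) ^ 2).

Definition on_ellipse (a b : R) (p : pt) : Prop :=
  (fst p) ^ 2 / a ^ 2 + (snd p) ^ 2 / b ^ 2 = 1.

Definition noncollinear (P Q S : pt) : Prop :=
  (fst Q - fst P) * (snd S - snd P) - (snd Q - snd P) * (fst S - fst P) <> 0.

(* At vertex P (on the ellipse), the normal to the ellipse, with direction
   (x/a^2, y/b^2), bisects the angle formed by the sides PQ and PS: the
   normal is parallel to the (internal) bisector direction u + v, where
   u, v are the unit vectors from P towards Q and S. *)
Definition normal_bisects (a b : R) (P Q S : pt) : Prop :=
  let ux := (fst Q - fst P) / pdist P Q in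
  let uy := (snd Q - snd P) / pdist P Q in
  let vx := (fst S - fst P) / pdist P S in
  let vy := (snd S - snd P) / pdist P S in
  let nx := fst P / a ^ 2 in
  let ny := snd P / b ^ 2 in
  (ux + vx) * ny - (uy + vy) * nx = 0.

Definition three_periodic (a b : R) (P1 P2 P3 : pt) : Prop :=
  on_ellipse a b P1 /\ on_ellipse a b P2 /\ on_ellipse a b P3 /\
  noncollinear P1 P2 P3 /\
  normal_bisects a b P1 P2 P3 /\
  normal_bisects a b P2 P3 P1 /\
  normal_bisects a b P3 P1 P2.

Definition focus1 (a b : R) : pt := (- sqrt (a ^ 2 - b ^ 2), 0).

Definition invert (f : pt) (rho : R) (P : pt) : pt :=
  let k := (rho / pdist P f) ^ 2 in
  (fst f + k * (fst P - fst f), snd f + k * (snd P - snd f)).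

Definition incenter (A B C : pt) : pt :=
  let la := pdist B C in
  let lb := pdist C A in
  let lc := pdist A B in
  let s := la + lb + lc in
  ((la * fst A + lb * fst B + lc * fst C) / s,
   (la * snd A + lb * snd B + lc * snd C) / s).

Definition delta (a b : R) : R := sqrt (a ^ 4 - a ^ 2 * b ^ 2 + b ^ 4).

(* Main.v *)
Require Import Defs.
From Stdlib Require Import Reals Lra Psatz.
From Coquelicot Require Import Complex.
Open Scope R_scope.

Definition Kn (k : R) (P Q : pt) : R := (fst P * snd Q - fst Q * snd P)^2 - k*(snd Q - snd P)^2.
Definition L2 (P Q : pt) : R := (fst P - fst Q)^2 + (snd P - snd Q)^2.
Definition mkP (a c cc ss : R) : pt := ((a^2-c^2)/(a-c*cc)*cc - c, (a^2-c^2)/(a-c*cc)*ss).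

Lemma pdist_sq (P Q : pt) : pdist P Q ^ 2 = L2 P Q.
Proof.
  unfold pdist, L2. rewrite pow2_sqrt; [reflexivity|]. apply Rplus_le_le_0_compat; apply pow2_ge_0.
Qed.

Lemma pdist_nonneg (P Q : pt) : 0 <= pdist P Q.
Proof. unfold pdist. apply sqrt_pos. Qed.

Lemma pdist_sym (P Q : pt) : pdist P Q = pdist Q P.
Proof. unfold pdist. f_equal. ring. Qed.

Lemma core1 (nx ny m11 m12 m22 w1 w2 v1 v2 : R) :
  nx^2+ny^2 <> 0 -> w1^2+w2^2 = 1 -> v1^2+v2^2 = 1 ->
  (w1+v1)*ny - (w2+v2)*nx = 0 ->
  (-ny)*(m11*nx + m12*ny) + nx*(m12*nx + m22*ny) = 0 ->
  m11*w1^2 + 2*m12*w1*w2 + m22*w2^2 = m11*v1^2 + 2*m12*v1*v2 + m22*v2^2.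
Proof.
  intros Hn Hw Hv Hs Hz.
  set (s1 := w1+v1). set (s2 := w2+v2). set (d1 := w1-v1). set (d2 := w2-v2).
  set (N := nx^2+ny^2).
  set (X := s1*ny - s2*nx).
  set (DS := d1*s1+d2*s2).
  set (Z := (-ny)*(m11*nx + m12*ny) + nx*(m12*nx + m22*ny)).
  set (nMn := nx*(m11*nx+m12*ny) + ny*(m12*nx+m22*ny)).
  set (pMp := (-ny)*(m11*(-ny)+m12*nx) + nx*(m12*(-ny)+m22*nx)).
  set (dn := d1*nx+d2*ny). set (dp := -d1*ny+d2*nx). set (sn := s1*nx+s2*ny).
  assert (E : N^2 * ((m11*w1^2 + 2*m12*w1*w2 + m22*w2^2) - (m11*v1^2 + 2*m12*v1*v2 + m22*v2^2))
    = (N*DS + dp*X)*nMn - dn*X*Z + dp*sn*Z - dp*X*pMp).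
  { unfold N, DS, X, Z, nMn, pMp, dn, dp, sn, s1, s2, d1, d2. ring. }
  assert (DS = 0) by (unfold DS, d1, d2, s1, s2; nra).
  assert (X = 0) by (unfold X; exact Hs).
  assert (Z = 0) by exact Hz.
  rewrite H, H0, H1 in E.
  assert (N^2 <> 0) by (apply pow_nonzero; exact Hn).
  apply Rminus_diag_uniq. apply (Rmult_eq_reg_l (N^2)); [|exact H2]. rewrite E; ring.
Qed.

Lemma step1 (a b : R) (P Q S : pt) : 0 < b -> b < a -> on_ellipse a b P ->
  pdist P Q <> 0 -> pdist P S <> 0 -> normal_bisects a b P Q S ->
  Kn (a^2-b^2) P Q * L2 P S = Kn (a^2-b^2) P S * L2 P Q.
Proof.
  destruct P as [x y], Q as [xq yq], S as [xs ys].
  intros hb hab He Hq Hs Hn.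
  unfold normal_bisects in Hn. cbn [fst snd] in Hn. unfold on_ellipse in He; cbn [fst snd] in He.
  set (l := pdist (x,y) (xq,yq)) in *. set (l' := pdist (x,y) (xs,ys)) in *.
  assert (Hl : l^2 = (x-xq)^2+(y-yq)^2) by (apply pdist_sq).
  assert (Hl' : l'^2 = (x-xs)^2+(y-ys)^2) by (apply pdist_sq).
  assert (ha : a <> 0) by lra. assert (hb0 : b <> 0) by lra.
  assert (Hnz : (x/a^2)^2 + (y/b^2)^2 <> 0).
  { intro Z. assert (x/a^2 = 0) by nra. assert (y/b^2 = 0) by nra.
    assert (x = 0). { apply (Rmult_eq_reg_r (/a^2)). lra. apply Rinv_neq_0_compat. apply pow_nonzero; lra. }
    assert (y = 0). { apply (Rmult_eq_reg_r (/b^2)). lra. apply Rinv_neq_0_compat. apply pow_nonzero; lra. }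
    subst. assert (0^2/a^2 + 0^2/b^2 = 0) by (field; split; assumption). lra. }
  assert (K := core1 (x/a^2) (y/b^2) (y^2) (-(x*y)) (x^2-(a^2-b^2))
     ((xq-x)/l) ((yq-y)/l) ((xs-x)/l') ((ys-y)/l') Hnz).
  assert (E1 : ((xq-x)/l)^2 + ((yq-y)/l)^2 = 1).
  { transitivity (((x-xq)^2+(y-yq)^2)/l^2). field. exact Hq. rewrite <- Hl. field. exact Hq. }
  assert (E2 : ((xs-x)/l')^2 + ((ys-y)/l')^2 = 1).
  { transitivity (((x-xs)^2+(y-ys)^2)/l'^2). field. exact Hs. rewrite <- Hl'. field. exact Hs. }
  specialize (K E1 E2).
  assert (E3 : ((xq - x) / l + (xs - x) / l') * (y / b ^ 2) - ((yq - y) / l + (ys - y) / l') * (x / a ^ 2) = 0) by (cbv zeta in Hn; lra).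
  specialize (K E3).
  assert (E4 : - (y / b ^ 2) * (y ^ 2 * (x / a ^ 2) + - (x * y) * (y / b ^ 2)) +
         x / a ^ 2 * (- (x * y) * (x / a ^ 2) + (x ^ 2 - (a ^ 2 - b ^ 2)) * (y / b ^ 2)) = 0).
  { transitivity (x*y*(a^2-b^2)/(a^2*b^2)*(x^2/a^2+y^2/b^2-1)).
    - field. split; assumption.
    - rewrite He. ring. }
  specialize (K E4).
  unfold Kn, L2; cbn [fst snd].
  rewrite <- Hl, <- Hl'.
  assert (K' : (y * xq - x * yq)^2 - (a^2-b^2)*(yq-y)^2 = ((y*xs - x*ys)^2 - (a^2-b^2)*(ys-y)^2) * l^2 / l'^2).
  { apply (Rmult_eq_reg_r (/ l^2)).
    - transitivity (y ^ 2 * ((xq - x) / l) ^ 2 + 2 * - (x * y) * ((xq - x) / l) * ((yq - y) / l) + (x ^ 2 - (a ^ 2 - b ^ 2)) * ((yq - y) / l) ^ 2).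
      + field. exact Hq.
      + rewrite K. field. split; assumption.
    - apply Rinv_neq_0_compat. apply pow_nonzero. exact Hq. }
  replace ((x * yq - xq * y) ^ 2) with ((y * xq - x * yq)^2) by ring.
  replace ((x * ys - xs * y) ^ 2) with ((y * xs - x * ys)^2) by ring.
  rewrite K'. field. exact Hs.
Qed.


Lemma c_facts (a b : R) : 0 < b -> b < a ->
  0 < sqrt (a^2-b^2) /\ sqrt (a^2-b^2) ^2 = a^2-b^2 /\ sqrt (a^2-b^2) < a.
Proof.
  intros hb hab.
  assert (H0 : 0 < a^2-b^2) by nra.
  assert (E : sqrt (a^2-b^2) ^2 = a^2-b^2) by (apply pow2_sqrt; lra).
  assert (P : 0 < sqrt (a^2-b^2)) by (apply sqrt_lt_R0; lra).
  split; [exact P|split; [exact E|]].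
  nra.
Qed.

Lemma d_pos (a c cc ss : R) : 0 < c -> c < a -> cc^2+ss^2 = 1 -> 0 < a - c*cc.
Proof. intros. assert (cc <= 1) by nra. assert (-1 <= cc) by nra. nra. Qed.

Lemma urep (a b x y : R) : 0 < b -> b < a -> on_ellipse a b (x,y) ->
  exists cc ss, cc^2+ss^2 = 1 /\ (x,y) = mkP a (sqrt (a^2-b^2)) cc ss.
Proof.
  intros hb hab He. unfold on_ellipse in He; cbn [fst snd] in He.
  destruct (c_facts a b hb hab) as [cp [c2 ca]].
  set (c := sqrt (a^2-b^2)) in *.
  assert (Hy : y^2 = b^2 - b^2*x^2/a^2).
  { assert (E : y^2 = b^2 * (y^2/b^2)) by (field; lra). rewrite E.
    replace (y^2/b^2) with (1 - x^2/a^2) by lra. field; lra. }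
  assert (Hx : x^2 <= a^2).
  { assert (0 <= y^2/b^2). { apply Rmult_le_pos. nra. left; apply Rinv_0_lt_compat; nra. }
    assert (x^2/a^2 <= 1) by lra.
    assert (x^2 = x^2/a^2 * a^2) by (field; lra). nra. }
  set (r := a + c*x/a).
  assert (hr : 0 < r).
  { unfold r. assert (Habs: -a <= x <= a) by (split; nra).
    assert (c*x/a >= -c).
    { apply Rle_ge. apply (Rmult_le_reg_r a). lra. replace (c*x/a*a) with (c*x) by (field; lra). nra. }
    lra. }
  exists ((x+c)/r), (y/r).
  assert (Hr2 : (x+c)^2 + y^2 = r^2).
  { unfold r. rewrite Hy. replace (b^2) with (a^2 - c^2) by lra. field. lra. }
  split.
  - transitivity (((x+c)^2+y^2)/r^2). field. lra. rewrite Hr2. field. lra.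
  - assert (Hd : a - c*((x+c)/r) = (a^2-c^2)/r).
    { assert (hr' : a*a + c*x <> 0).
      { assert (a*r = a*a+c*x) by (unfold r; field; lra). nra. }
      unfold r. field. repeat split; try lra. }
    unfold mkP. rewrite Hd.
    assert (hB : a^2-c^2 <> 0) by nra.
    assert (E : (a^2-c^2)/((a^2-c^2)/r) = r) by (field; split; lra).
    rewrite E. f_equal; field; lra.
Qed.

Definition TanG (K1 K2 K3 cj sj ck sk : R) : R := K1*(cj+ck) + K2*(cj*ck+sj*sk) + K3.
Definition cU (x y : R) : C := (x, y).
Definition cB (x y : R) : C := (x, -y).
Definition qq (cj sj ck sk : R) : R := (cj-ck)^2+(sj-sk)^2.

Lemma Ceq (x y : C) : fst x = fst y -> snd x = snd y -> x = y.
Proof. destruct x, y; simpl; intros; subst; reflexivity. Qed.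

Lemma cU_neq0 (cc ss : R) : cc^2+ss^2 = 1 -> cU cc ss <> 0%C.
Proof. intros H E. unfold cU in E. injection E; intros; subst. lra. Qed.

Lemma unit_inv (cc ss : R) : cc^2+ss^2 = 1 -> cB cc ss = Cinv (cU cc ss).
Proof.
  intros H. assert (Hne := cU_neq0 cc ss H).
  transitivity ((cB cc ss * cU cc ss) * Cinv (cU cc ss))%C.
  - field. exact Hne.
  - replace (cB cc ss * cU cc ss)%C with (RtoC 1) by (apply Ceq; unfold cB, cU; simpl; nra). ring.
Qed.

Definition Qt (K1 K2 K3 : R) (X Y : C) : C :=
  (RtoC K1*(X+Y)*(1+X*Y) + RtoC K2*(X*X+Y*Y) + 2*RtoC K3*X*Y)%C.

Lemma Q_of_Tan (K1 K2 K3 cj sj ck sk : R) : cj^2+sj^2 = 1 -> ck^2+sk^2 = 1 ->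
  Qt K1 K2 K3 (cU cj sj) (cU ck sk)
  = (2 * cU cj sj * cU ck sk * RtoC (TanG K1 K2 K3 cj sj ck sk))%C.
Proof.
  intros Hj Hk.
  assert (E : (2 * RtoC (TanG K1 K2 K3 cj sj ck sk) =
    RtoC K1*((cU cj sj + cB cj sj) + (cU ck sk + cB ck sk))
     + RtoC K2*((cU cj sj * cB ck sk + cB cj sj * cU ck sk))
     + 2*RtoC K3)%C).
  { unfold TanG, cU, cB. apply Ceq; simpl; ring. }
  replace (2 * cU cj sj * cU ck sk * RtoC (TanG K1 K2 K3 cj sj ck sk))%C with
    (cU cj sj * cU ck sk * (2 * RtoC (TanG K1 K2 K3 cj sj ck sk)))%C by ring.
  rewrite E. rewrite (unit_inv cj sj Hj), (unit_inv ck sk Hk).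
  assert (Nj := cU_neq0 cj sj Hj). assert (Nk := cU_neq0 ck sk Hk).
  unfold Qt. field. split; assumption.
Qed.

Lemma Cmul_zero_r (x y : C) : (x*y = 0)%C -> x <> 0%C -> y = 0%C.
Proof.
  intros H Hx. transitivity (Cinv x * (x*y))%C.
  - field. exact Hx.
  - rewrite H. ring.
Qed.

Lemma Csub_neq0 (x y : C) : x <> y -> (x - y)%C <> 0%C.
Proof.
  intros H E. apply H. transitivity ((x - y) + y)%C. ring. rewrite E. ring.
Qed.

Lemma sym_relations (K1 K2 K3 : R) (X1 X2 X3 : C) :
  X1 <> X2 -> X1 <> X3 -> X2 <> X3 ->
  Qt K1 K2 K3 X1 X2 = 0%C -> Qt K1 K2 K3 X1 X3 = 0%C -> Qt K1 K2 K3 X2 X3 = 0%C ->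
  (RtoC K1*(X1+X2+X3) - RtoC K2 + 2*RtoC K3 = 0)%C /\ (RtoC K2*(X1+X2+X3) + RtoC K1 = 0)%C.
Proof.
  intros N12 N13 N23 H12 H13 H23.
  set (E1 := ((RtoC K1*X1 + RtoC K2)*(X2+X3) + RtoC K1*X1*X1 + 2*RtoC K3*X1 + RtoC K1)%C).
  set (E2 := ((RtoC K1*X2 + RtoC K2)*(X1+X3) + RtoC K1*X2*X2 + 2*RtoC K3*X2 + RtoC K1)%C).
  assert (HE1 : E1 = 0%C).
  { apply (Cmul_zero_r (X2 - X3)); [|apply Csub_neq0; exact N23].
    transitivity (Qt K1 K2 K3 X1 X2 - Qt K1 K2 K3 X1 X3)%C.
    - unfold E1, Qt. ring.
    - rewrite H12, H13. ring. }
  assert (HE2 : E2 = 0%C).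
  { apply (Cmul_zero_r (X1 - X3)); [|apply Csub_neq0; exact N13].
    transitivity (Qt K1 K2 K3 X1 X2 - Qt K1 K2 K3 X2 X3)%C.
    - unfold E2, Qt. ring.
    - rewrite H12, H23. ring. }
  assert (R1 : (RtoC K1*(X1+X2+X3) - RtoC K2 + 2*RtoC K3 = 0)%C).
  { apply (Cmul_zero_r (X1 - X2)); [|apply Csub_neq0; exact N12].
    transitivity (E1 - E2)%C.
    - unfold E1, E2. ring.
    - rewrite HE1, HE2. ring. }
  split; [exact R1|].
  transitivity (E1 - (RtoC K1*(X1+X2+X3) - RtoC K2 + 2*RtoC K3)*X1)%C.
  - unfold E1. ring.
  - rewrite HE1, R1. ring.
Qed.

Definition HS (a c e1 e2 e3 : C) : C :=
  let p2 := (e1*e1 - 2*e2)%C in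
  let p3 := (e1*e1*e1 - 3*e1*e2 + 3*e3)%C in
  let p4 := (e1*p3 - e2*p2 + e3*e1)%C in
  let p5 := (e1*p4 - e2*p3 + e3*p2)%C in
  (2*a*(2*e2*e2 - 6*e1*e3) - c*(p3*p2 - p5 - 2*e3*p2) - c*(e1*e2 - 9*e3))%C.

Lemma W_lemma (a c t c1 s1 c2 s2 c3 s3 : R) :
  c1^2+s1^2 = 1 -> c2^2+s2^2 = 1 -> c3^2+s3^2 = 1 ->
  c1+c2+c3 = t -> s1+s2+s3 = 0 ->
  let tau := (cU c1 s1 * cU c2 s2 * cU c3 s3)%C in
  let m := c*t^2 - 4*a*t + 3*c in
  2*(qq c2 s2 c3 s3*c1*(a-c*c1) + qq c1 s1 c3 s3*c2*(a-c*c2) + qq c1 s1 c2 s2*c3*(a-c*c3))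
    = -3*m + m*t*fst tau /\
  2*(qq c2 s2 c3 s3*s1*(a-c*c1) + qq c1 s1 c3 s3*s2*(a-c*c2) + qq c1 s1 c2 s2*s3*(a-c*c3))
    = m*t*snd tau.
Proof.
  intros H1 H2 H3 Hc Hs. cbv zeta.
  remember (c*t^2 - 4*a*t + 3*c) as m eqn:Hm.
  set (U1 := cU c1 s1). set (U2 := cU c2 s2). set (U3 := cU c3 s3).
  assert (N1 := cU_neq0 c1 s1 H1). assert (N2 := cU_neq0 c2 s2 H2). assert (N3 := cU_neq0 c3 s3 H3).
  fold U1 in N1. fold U2 in N2. fold U3 in N3.
  assert (hT1 : (U1 + U2 + U3)%C = RtoC t).
  { unfold U1, U2, U3, cU. apply Ceq; simpl; lra. }
  assert (hT2 : (U1*U2 + U1*U3 + U2*U3)%C = (RtoC t * (U1*U2*U3))%C).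
  { transitivity ((U1*U2*U3) * (cB c1 s1 + cB c2 s2 + cB c3 s3))%C.
    - rewrite (unit_inv c1 s1 H1), (unit_inv c2 s2 H2), (unit_inv c3 s3 H3). fold U1 U2 U3.
      field. repeat split; assumption.
    - replace (cB c1 s1 + cB c2 s2 + cB c3 s3)%C with (RtoC t).
      + ring.
      + unfold cB. apply Ceq; simpl; lra. }
  set (Wx := qq c2 s2 c3 s3*c1*(a-c*c1) + qq c1 s1 c3 s3*c2*(a-c*c2) + qq c1 s1 c2 s2*c3*(a-c*c3)).
  set (Wy := qq c2 s2 c3 s3*s1*(a-c*c1) + qq c1 s1 c3 s3*s2*(a-c*c2) + qq c1 s1 c2 s2*s3*(a-c*c3)).
  assert (EW : cU (2*Wx) (2*Wy) =
    ((U2 - U3)*(cB c2 s2 - cB c3 s3)*U1*(2*RtoC a - RtoC c*(U1 + cB c1 s1))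
   + (U1 - U3)*(cB c1 s1 - cB c3 s3)*U2*(2*RtoC a - RtoC c*(U2 + cB c2 s2))
   + (U1 - U2)*(cB c1 s1 - cB c2 s2)*U3*(2*RtoC a - RtoC c*(U3 + cB c3 s3)))%C).
  { unfold Wx, Wy, U1, U2, U3, cU, cB, qq. apply Ceq; simpl; ring. }
  rewrite (unit_inv c1 s1 H1), (unit_inv c2 s2 H2), (unit_inv c3 s3 H3) in EW. fold U1 U2 U3 in EW.
  assert (EH : ((U2 - U3)*(/U2 - /U3)*U1*(2*RtoC a - RtoC c*(U1 + /U1))
   + (U1 - U3)*(/U1 - /U3)*U2*(2*RtoC a - RtoC c*(U2 + /U2))
   + (U1 - U2)*(/U1 - /U2)*U3*(2*RtoC a - RtoC c*(U3 + /U3)))%C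
   = (- HS (RtoC a) (RtoC c) (U1+U2+U3) (U1*U2+U1*U3+U2*U3) (U1*U2*U3) / (U1*U2*U3))%C).
  { unfold HS. cbv zeta. field. repeat split; assumption. }
  rewrite EH, hT1, hT2 in EW.
  remember (U1*U2*U3)%C as tau eqn:Htau.
  assert (Ntau : tau <> 0%C).
  { rewrite Htau. intro Z. apply N3. apply (Cmul_zero_r (U1*U2)); [exact Z|].
    intro Z2. apply N2. apply (Cmul_zero_r U1); assumption. }
  assert (EF : cU (2*Wx) (2*Wy) = (- RtoC m * (3 - RtoC t * tau))%C).
  { rewrite EW. unfold HS. cbv zeta. rewrite Hm.
    replace (t^2) with (t*t) by ring.
    rewrite !RtoC_plus, !RtoC_minus, !RtoC_mult.
    field. exact Ntau. }
  split.
  - apply (f_equal fst) in EF. simpl in EF. rewrite EF. destruct tau as [tx ty]. simpl. ring.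
  - apply (f_equal snd) in EF. simpl in EF. rewrite EF. destruct tau as [tx ty]. simpl. ring.
Qed.


Definition Tan (a c lam cj sj ck sk : R) : R := TanG (-2*a*c*lam) (a^2*(a^2-c^2)+lam*c^2) (lam*(c^2+2*a^2)-a^2*(a^2-c^2)) cj sj ck sk.

Lemma I2 (a c lam cj sj ck sk : R) : a - c*cj <> 0 -> a - c*ck <> 0 ->
  cj^2+sj^2 = 1 -> ck^2+sk^2 = 1 ->
  2*(a^2-c^2)^2*(Kn (c^2) (mkP a c cj sj) (mkP a c ck sk) - ((a^2-c^2)-lam)*L2 (mkP a c cj sj) (mkP a c ck sk))
  = qq cj sj ck sk * ((a^2-c^2)/(a-c*cj))^2 * ((a^2-c^2)/(a-c*ck))^2 * Tan a c lam cj sj ck sk.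
Proof.
  intros Hj Hk Uj Uk.
  apply Rminus_diag_uniq.
  transitivity (((2*a*c^9*cj*lam - 2*a*c^9*ck*lam + 4*a^2*c^8*cj*ck*lam - 8*a^2*c^8*ck^2*lam + 4*a^2*c^8*lam + 4*a^2*c^8*lam*sj*sk - 8*a^2*c^8*lam*sk^2 + a^2*c^10 + a^2*c^10*cj*ck - 2*a^2*c^10*ck^2 + a^2*c^10*sj*sk - 2*a^2*c^10*sk^2 - 8*a^3*c^7*cj*lam + 8*a^3*c^7*ck*lam - 6*a^4*c^6*cj*ck*lam + 12*a^4*c^6*ck^2*lam - 6*a^4*c^6*lam - 6*a^4*c^6*lam*sj*sk + 12*a^4*c^6*lam*sk^2 - 5*a^4*c^8 - 5*a^4*c^8*cj*ck + 10*a^4*c^8*ck^2 - 5*a^4*c^8*sj*sk + 10*a^4*c^8*sk^2 + 12*a^5*c^5*cj*lam - 12*a^5*c^5*ck*lam + 4*a^6*c^4*cj*ck*lam - 8*a^6*c^4*ck^2*lam + 4*a^6*c^4*lam + 4*a^6*c^4*lam*sj*sk - 8*a^6*c^4*lam*sk^2 + 10*a^6*c^6 + 10*a^6*c^6*cj*ck - 20*a^6*c^6*ck^2 + 10*a^6*c^6*sj*sk - 20*a^6*c^6*sk^2 - 8*a^7*c^3*cj*lam + 8*a^7*c^3*ck*lam - a^8*c^2*cj*ck*lam + 2*a^8*c^2*ck^2*lam - a^8*c^2*lam - a^8*c^2*lam*sj*sk + 2*a^8*c^2*lam*sk^2 - 10*a^8*c^4 - 10*a^8*c^4*cj*ck +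 20*a^8*c^4*ck^2 - 10*a^8*c^4*sj*sk + 20*a^8*c^4*sk^2 + 2*a^9*c*cj*lam - 2*a^9*c*ck*lam + 5*a^10*c^2 + 5*a^10*c^2*cj*ck - 10*a^10*c^2*ck^2 + 5*a^10*c^2*sj*sk - 10*a^10*c^2*sk^2 - a^12 - a^12*cj*ck + 2*a^12*ck^2 - a^12*sj*sk + 2*a^12*sk^2 - c^10*cj*ck*lam + 2*c^10*ck^2*lam - c^10*lam - c^10*lam*sj*sk + 2*c^10*lam*sk^2)*(cj^2+sj^2-1) + (- 2*a*c^9*cj*lam + 2*a*c^9*ck*lam + 4*a^2*c^8*cj*ck*lam - 4*a^2*c^8*lam + 4*a^2*c^8*lam*sj*sk - a^2*c^10 + a^2*c^10*cj*ck + a^2*c^10*sj*sk + 8*a^3*c^7*cj*lam - 8*a^3*c^7*ck*lam - 6*a^4*c^6*cj*ck*lam + 6*a^4*c^6*lam - 6*a^4*c^6*lam*sj*sk + 5*a^4*c^8 - 5*a^4*c^8*cj*ck - 5*a^4*c^8*sj*sk - 12*a^5*c^5*cj*lam + 12*a^5*c^5*ck*lam + 4*a^6*c^4*cj*ck*lam - 4*a^6*c^4*lam + 4*a^6*c^4*lam*sj*sk - 10*a^6*c^6 + 10*a^6*c^6*cj*ck + 10*a^6*c^6*sj*sk + 8*a^7*c^3*cj*lam - 8*a^7*c^3*ck*lam - a^8*c^2*cj*ck*lam + a^8*c^2*lam - a^8*c^2*lam*sj*sk + 10*a^8*c^4 - 10*a^8*c^4*cj*ck - 10*a^8*c^4*sj*sk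 - 2*a^9*c*cj*lam + 2*a^9*c*ck*lam - 5*a^10*c^2 + 5*a^10*c^2*cj*ck + 5*a^10*c^2*sj*sk + a^12 - a^12*cj*ck - a^12*sj*sk - c^10*cj*ck*lam + c^10*lam - c^10*lam*sj*sk)*(ck^2+sk^2-1))/((a-c*cj)^2*(a-c*ck)^2)).
  - unfold Kn, L2, mkP, qq, Tan, TanG; cbn [fst snd]. field. split; assumption.
  - replace (cj^2+sj^2-1) with 0 by lra. replace (ck^2+sk^2-1) with 0 by lra. field. split; assumption.
Qed.

Lemma I3 (a c cj sj ck sk : R) : a - c*cj <> 0 -> a - c*ck <> 0 ->
  cj^2+sj^2 = 1 -> ck^2+sk^2 = 1 ->
  4*(a^2-c^2)*((a^2-c^2)*L2 (mkP a c cj sj) (mkP a c ck sk) - Kn (c^2) (mkP a c cj sj) (mkP a c ck sk))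
  = (a * qq cj sj ck sk * ((a^2-c^2)/(a-c*cj)) * ((a^2-c^2)/(a-c*ck)))^2.
Proof.
  intros Hj Hk Uj Uk.
  apply Rminus_diag_uniq.
  transitivity (((3*a^2*c^8 + 4*a^2*c^8*cj*ck - a^2*c^8*cj^2 - 6*a^2*c^8*ck^2 + 4*a^2*c^8*sj*sk - a^2*c^8*sj^2 - 6*a^2*c^8*sk^2 - 12*a^4*c^6 - 16*a^4*c^6*cj*ck + 4*a^4*c^6*cj^2 + 24*a^4*c^6*ck^2 - 16*a^4*c^6*sj*sk + 4*a^4*c^6*sj^2 + 24*a^4*c^6*sk^2 + 18*a^6*c^4 + 24*a^6*c^4*cj*ck - 6*a^6*c^4*cj^2 - 36*a^6*c^4*ck^2 + 24*a^6*c^4*sj*sk - 6*a^6*c^4*sj^2 - 36*a^6*c^4*sk^2 - 12*a^8*c^2 - 16*a^8*c^2*cj*ck + 4*a^8*c^2*cj^2 + 24*a^8*c^2*ck^2 - 16*a^8*c^2*sj*sk + 4*a^8*c^2*sj^2 + 24*a^8*c^2*sk^2 + 3*a^10 + 4*a^10*cj*ck - a^10*cj^2 - 6*a^10*ck^2 + 4*a^10*sj*sk - a^10*sj^2 - 6*a^10*sk^2)*(cj^2+sj^2-1) + (- 3*a^2*c^8 + 4*a^2*c^8*cj*ck - a^2*c^8*ck^2 + 4*a^2*c^8*sj*sk - a^2*c^8*sk^2 + 12*a^4*c^6 - 16*a^4*c^6*cj*ck + 4*a^4*c^6*ck^2 - 16*a^4*c^6*sj*sk + 4*a^4*c^6*sk^2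 - 18*a^6*c^4 + 24*a^6*c^4*cj*ck - 6*a^6*c^4*ck^2 + 24*a^6*c^4*sj*sk - 6*a^6*c^4*sk^2 + 12*a^8*c^2 - 16*a^8*c^2*cj*ck + 4*a^8*c^2*ck^2 - 16*a^8*c^2*sj*sk + 4*a^8*c^2*sk^2 - 3*a^10 + 4*a^10*cj*ck - a^10*ck^2 + 4*a^10*sj*sk - a^10*sk^2)*(ck^2+sk^2-1))/((a-c*cj)^2*(a-c*ck)^2)).
  - unfold Kn, L2, mkP, qq; cbn [fst snd]. field. split; assumption.
  - replace (cj^2+sj^2-1) with 0 by lra. replace (ck^2+sk^2-1) with 0 by lra. field. split; assumption.
Qed.

Lemma Ka_poly (a b dl : R) : dl^2 = a^4 - a^2*b^2 + b^4 ->
  let Nu := a*(2*dl-a^2-b^2) in let Du := dl - b^2 in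
  (-2*a^2+b^2+2*dl)*(9*(a^2-b^2)*Du^2 - Nu^2) + 3*b^2*(Nu^2 - 4*a*Nu*Du + 3*(a^2-b^2)*Du^2) = 0.
Proof.
  intros H Nu Du. unfold Nu, Du.
  transitivity ((- 8*a^2*b^2 + 10*a^2*dl - 2*a^4 - 18*b^2*dl + 18*b^4)*(dl^2 - (a^4 - a^2*b^2 + b^4))). ring. rewrite H. ring.
Qed.

Lemma Kb_poly (a b dl : R) : dl^2 = a^4 - a^2*b^2 + b^4 ->
  let Nu := a*(2*dl-a^2-b^2) in let Du := dl - b^2 in
  (-2*dl^2+b^4+(2*a^2-b^2)*dl)*Du*(9*(a^2-b^2)*Du^2 - Nu^2) + a*b^2*(Nu^2 - 4*a*Nu*Du + 3*(a^2-b^2)*Du^2)*Nu = 0.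
Proof.
  intros H Nu Du. unfold Nu, Du.
  transitivity ((15*a^2*b^2*dl^2 - 4*a^2*b^6 - 10*a^2*dl^3 - 4*a^4*b^2*dl + 2*a^4*dl^2 + a^6*b^2 + 18*b^2*dl^3 - 45*b^4*dl^2 + 36*b^6*dl - 9*b^8)*(dl^2 - (a^4 - a^2*b^2 + b^4))). ring. rewrite H. ring.
Qed.


Lemma pdist_focus (a c cc ss : R) : 0 < c -> c < a -> cc^2+ss^2 = 1 ->
  pdist (mkP a c cc ss) (-c,0) = (a^2-c^2)/(a-c*cc).
Proof.
  intros cp ca U. assert (hd := d_pos a c cc ss cp ca U).
  assert (hr : 0 < (a^2-c^2)/(a-c*cc)).
  { apply Rdiv_lt_0_compat; nra. }
  unfold pdist, mkP; cbn [fst snd].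
  replace (((a ^ 2 - c ^ 2) / (a - c * cc) * cc - c - - c) ^ 2 + ((a ^ 2 - c ^ 2) / (a - c * cc) * ss - 0) ^ 2)
    with (((a^2-c^2)/(a-c*cc))^2 * (cc^2+ss^2)) by ring.
  rewrite U, Rmult_1_r. apply sqrt_pow2. lra.
Qed.

Lemma invert_form (a c rho cc ss : R) : 0 < c -> c < a -> cc^2+ss^2 = 1 ->
  invert (-c,0) rho (mkP a c cc ss) =
  (-c + rho^2*cc/((a^2-c^2)/(a-c*cc)), rho^2*ss/((a^2-c^2)/(a-c*cc))).
Proof.
  intros cp ca U. assert (hd := d_pos a c cc ss cp ca U).
  assert (hr : 0 < (a^2-c^2)/(a-c*cc)) by (apply Rdiv_lt_0_compat; nra).
  assert (hB : a^2 - c^2 <> 0) by nra. assert (hd' : a - c*cc <> 0) by lra.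
  unfold invert. rewrite (pdist_focus a c cc ss cp ca U). unfold mkP; cbn [fst snd].
  f_equal; field; repeat split; assumption.
Qed.

Lemma invdist (c rho rj rk cj sj ck sk : R) : rj <> 0 -> rk <> 0 -> cj^2+sj^2 = 1 -> ck^2+sk^2 = 1 ->
  pdist (-c + rho^2*cj/rj, rho^2*sj/rj) (-c + rho^2*ck/rk, rho^2*sk/rk) ^2
  = rho^4 * ((rj*cj - rk*ck)^2 + (rj*sj - rk*sk)^2) / (rj^2*rk^2).
Proof.
  intros hj hk Uj Uk. rewrite pdist_sq. unfold L2; cbn [fst snd].
  assert (E1: (rj*cj - rk*ck)^2 + (rj*sj-rk*sk)^2 = rj^2 + rk^2 - 2*rj*rk*(cj*ck+sj*sk)).
  { transitivity (rj^2*(cj^2+sj^2) + rk^2*(ck^2+sk^2) - 2*rj*rk*(cj*ck+sj*sk)); [ring| rewrite Uj, Uk; ring]. }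
  rewrite E1.
  transitivity (rho^4*(rk^2*(cj^2+sj^2) + rj^2*(ck^2+sk^2) - 2*rj*rk*(cj*ck+sj*sk))/(rj^2*rk^2)).
  - field. split; assumption.
  - rewrite Uj, Uk. field. split; assumption.
Qed.

Lemma L2_mkP (a c cj sj ck sk : R) :
  L2 (mkP a c cj sj) (mkP a c ck sk) =
  ((a^2-c^2)/(a-c*cj)*cj - (a^2-c^2)/(a-c*ck)*ck)^2 + ((a^2-c^2)/(a-c*cj)*sj - (a^2-c^2)/(a-c*ck)*sk)^2.
Proof. unfold L2, mkP; cbn [fst snd]. ring. Qed.

Lemma incenter_form (c rho k q1 q2 q3 x1 y1 x2 y2 x3 y3 : R) : 0 < k -> 0 < q1+q2+q3 ->
  pdist (x2,y2) (x3,y3) = k*q1 -> pdist (x3,y3) (x1,y1) = k*q2 -> pdist (x1,y1) (x2,y2) = k*q3 ->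
  incenter (x1,y1) (x2,y2) (x3,y3) = ((q1*x1+q2*x2+q3*x3)/(q1+q2+q3), (q1*y1+q2*y2+q3*y3)/(q1+q2+q3)).
Proof.
  intros hk hq E1 E2 E3. unfold incenter. rewrite E1, E2, E3. cbn [fst snd].
  f_equal; field; nra.
Qed.

Lemma sq0 (z : R) : z^2 = 0 -> z = 0.
Proof. intros H. apply Rsqr_0_uniq. unfold Rsqr. rewrite <- H. ring. Qed.

Lemma pdist_neq0 (P Q : pt) : P <> Q -> pdist P Q <> 0.
Proof.
  destruct P as [x y], Q as [x' y']. intros H E. apply H.
  assert (L2 (x,y) (x',y') = 0) by (rewrite <- pdist_sq, E; ring).
  unfold L2 in H0; cbn [fst snd] in H0.
  assert (0 <= (x-x')^2) by apply pow2_ge_0. assert (0 <= (y-y')^2) by apply pow2_ge_0.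
  assert (x - x' = 0) by (apply sq0; lra). assert (y - y' = 0) by (apply sq0; lra).
  assert (x = x') by lra. assert (y = y') by lra. subst; reflexivity.
Qed.

Lemma L2_pos (P Q : pt) : P <> Q -> 0 < L2 P Q.
Proof.
  intros H. rewrite <- pdist_sq. assert (pdist P Q <> 0) by (apply pdist_neq0; exact H).
  assert (0 <= pdist P Q) by apply pdist_nonneg. nra.
Qed.

Lemma Kn_sym (k : R) (P Q : pt) : Kn k P Q = Kn k Q P.
Proof. unfold Kn. ring. Qed.
Lemma L2_sym (P Q : pt) : L2 P Q = L2 Q P.
Proof. unfold L2. ring. Qed.

Lemma qq_pos (a c cj sj ck sk : R) : mkP a c cj sj <> mkP a c ck sk -> 0 < qq cj sj ck sk.
Proof.
  intros H. unfold qq.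
  destruct (Rtotal_order 0 ((cj - ck) ^ 2 + (sj - sk) ^ 2)) as [h|[h|h]].
  - exact h.
  - exfalso. assert (0 <= (cj-ck)^2) by apply pow2_ge_0. assert (0 <= (sj-sk)^2) by apply pow2_ge_0.
    assert (cj - ck = 0) by (apply sq0; lra). assert (sj - sk = 0) by (apply sq0; lra).
    assert (cj = ck) by lra. assert (sj = sk) by lra. subst. apply H; reflexivity.
  - exfalso. assert (0 <= (cj-ck)^2) by apply pow2_ge_0. assert (0 <= (sj-sk)^2) by apply pow2_ge_0. lra.
Qed.

Lemma cU_neq (a c cj sj ck sk : R) : mkP a c cj sj <> mkP a c ck sk -> cU cj sj <> cU ck sk.
Proof. intros H E. unfold cU in E. injection E; intros; subst. apply H; reflexivity. Qed.

Lemma part1 (a b c cc1 ss1 cc2 ss2 cc3 ss3 : R) :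
  0 < b -> 0 < c -> c < a -> c^2 = a^2-b^2 ->
  cc1^2+ss1^2 = 1 -> cc2^2+ss2^2 = 1 -> cc3^2+ss3^2 = 1 ->
  three_periodic a b (mkP a c cc1 ss1) (mkP a c cc2 ss2) (mkP a c cc3 ss3) ->
  exists lam, 0 < lam /\ Tan a c lam cc1 ss1 cc2 ss2 = 0 /\ Tan a c lam cc1 ss1 cc3 ss3 = 0 /\ Tan a c lam cc2 ss2 cc3 ss3 = 0 /\ 4*(a^2-c^2)*lam*L2 (mkP a c cc1 ss1) (mkP a c cc2 ss2) = (a * qq cc1 ss1 cc2 ss2 * ((a^2-c^2)/(a-c*cc1)) * ((a^2-c^2)/(a-c*cc2)))^2 /\ 4*(a^2-c^2)*lam*L2 (mkP a c cc1 ss1) (mkP a c cc3 ss3) = (a * qq cc1 ss1 cc3 ss3 * ((a^2-c^2)/(a-c*cc1)) * ((a^2-c^2)/(a-c*cc3)))^2 /\ 4*(a^2-c^2)*lam*L2 (mkP a c cc2 ss2) (mkP a c cc3 ss3) = (a * qq cc2 ss2 cc3 ss3 * ((a^2-c^2)/(a-c*cc2)) * ((a^2-c^2)/(a-c*cc3)))^2.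
Proof.
  intros hb cp ca c2 U1 U2 U3 h3.
  assert (hab : b < a) by nra.
  destruct h3 as [He1 [He2 [He3 [Hnc [Hb1 [Hb2 Hb3]]]]]].
  set (P1 := mkP a c cc1 ss1) in *. set (P2 := mkP a c cc2 ss2) in *. set (P3 := mkP a c cc3 ss3) in *.
  assert (N12 : P1 <> P2) by (intro E; apply Hnc; rewrite E; ring).
  assert (N13 : P1 <> P3) by (intro E; apply Hnc; rewrite E; ring).
  assert (N23 : P2 <> P3) by (intro E; apply Hnc; rewrite E; ring).
  assert (S1 := step1 a b P1 P2 P3 hb hab He1 (pdist_neq0 _ _ N12) (pdist_neq0 _ _ N13) Hb1).
  assert (N21 : P2 <> P1) by (intro E; apply N12; symmetry; exact E).
  assert (S2 := step1 a b P2 P3 P1 hb hab He2 (pdist_neq0 _ _ N23) (pdist_neq0 _ _ N21) Hb2).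
  rewrite <- c2 in S1, S2.
  rewrite (Kn_sym _ P2 P1), (L2_sym P2 P1) in S2.
  assert (L12 := L2_pos _ _ N12). assert (L13 := L2_pos _ _ N13). assert (L23 := L2_pos _ _ N23).
  set (kap := Kn (c^2) P1 P2 / L2 P1 P2).
  set (lam := (a^2-c^2) - kap).
  assert (T12 : Kn (c^2) P1 P2 - ((a^2-c^2)-lam)*L2 P1 P2 = 0).
  { unfold lam, kap. field. lra. }
  assert (T13 : Kn (c^2) P1 P3 - ((a^2-c^2)-lam)*L2 P1 P3 = 0).
  { unfold lam, kap. apply (Rmult_eq_reg_r (L2 P1 P2)); [|lra].
    transitivity (Kn (c ^ 2) P1 P3 * L2 P1 P2 - Kn (c^2) P1 P2 * L2 P1 P3). field. lra.
    rewrite <- S1. ring. }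
  assert (T23 : Kn (c^2) P2 P3 - ((a^2-c^2)-lam)*L2 P2 P3 = 0).
  { unfold lam, kap. apply (Rmult_eq_reg_r (L2 P1 P2)); [|lra].
    transitivity (Kn (c ^ 2) P2 P3 * L2 P1 P2 - Kn (c^2) P1 P2 * L2 P2 P3). field. lra.
    rewrite S2. ring. }
  assert (hd1 := d_pos a c cc1 ss1 cp ca U1). assert (hd2 := d_pos a c cc2 ss2 cp ca U2).
  assert (hd3 := d_pos a c cc3 ss3 cp ca U3).
  assert (hB : 0 < a^2-c^2) by nra.
  assert (hr1 : 0 < (a^2-c^2)/(a-c*cc1)) by (apply Rdiv_lt_0_compat; lra).
  assert (hr2 : 0 < (a^2-c^2)/(a-c*cc2)) by (apply Rdiv_lt_0_compat; lra).
  assert (hr3 : 0 < (a^2-c^2)/(a-c*cc3)) by (apply Rdiv_lt_0_compat; lra).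
  assert (q12 := qq_pos _ _ _ _ _ _ N12). assert (q13 := qq_pos _ _ _ _ _ _ N13).
  assert (q23 := qq_pos _ _ _ _ _ _ N23).
  assert (G : forall cj sj ck sk, 0 < a - c*cj -> 0 < a - c*ck -> cj^2+sj^2=1 -> ck^2+sk^2=1 ->
     0 < qq cj sj ck sk ->
     Kn (c^2) (mkP a c cj sj) (mkP a c ck sk) - ((a^2-c^2)-lam)*L2 (mkP a c cj sj) (mkP a c ck sk) = 0 ->
     Tan a c lam cj sj ck sk = 0 /\  4*(a^2-c^2)*lam*L2 (mkP a c cj sj) (mkP a c ck sk) = (a * qq cj sj ck sk * ((a^2-c^2)/(a-c*cj)) * ((a^2-c^2)/(a-c*ck)))^2).
  { intros cj sj ck sk dj dk Uj Uk qp T.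
    assert (E2 := I2 a c lam cj sj ck sk ltac:(lra) ltac:(lra) Uj Uk).
    assert (E3 := I3 a c cj sj ck sk ltac:(lra) ltac:(lra) Uj Uk).
    rewrite T in E2.
    assert (rj : 0 < (a^2-c^2)/(a-c*cj)) by (apply Rdiv_lt_0_compat; lra).
    assert (rk : 0 < (a^2-c^2)/(a-c*ck)) by (apply Rdiv_lt_0_compat; lra).
    split.
    - assert (Z : qq cj sj ck sk * ((a ^ 2 - c ^ 2) / (a - c * cj)) ^ 2 * ((a ^ 2 - c ^ 2) / (a - c * ck)) ^ 2 <> 0).
      { apply Rmult_integral_contrapositive_currified; [apply Rmult_integral_contrapositive_currified|]; try lra;
        apply pow_nonzero; lra. }
      apply (Rmult_eq_reg_l (qq cj sj ck sk * ((a ^ 2 - c ^ 2) / (a - c * cj)) ^ 2 *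
  ((a ^ 2 - c ^ 2) / (a - c * ck)) ^ 2)); [rewrite <- E2; ring | exact Z].
    - rewrite <- E3.
      replace (Kn (c ^ 2) (mkP a c cj sj) (mkP a c ck sk)) with ((a ^ 2 - c ^ 2 - lam) * L2 (mkP a c cj sj) (mkP a c ck sk)) by lra.
      ring. }
  destruct (G cc1 ss1 cc2 ss2 hd1 hd2 U1 U2 q12 T12) as [Ta Ea].
  destruct (G cc1 ss1 cc3 ss3 hd1 hd3 U1 U3 q13 T13) as [Tb Eb].
  destruct (G cc2 ss2 cc3 ss3 hd2 hd3 U2 U3 q23 T23) as [Tc Ec].
  exists lam. split; [|repeat split; assumption].
  assert (0 < (a * qq cc1 ss1 cc2 ss2 * ((a ^ 2 - c ^ 2) / (a - c * cc1)) * ((a ^ 2 - c ^ 2) / (a - c * cc2))) ^ 2).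
  { apply pow_lt. apply Rmult_lt_0_compat; [apply Rmult_lt_0_compat; [apply Rmult_lt_0_compat|]|]; lra. }
  fold P1 P2 in Ea.
  assert (HK : 0 < 4*(a^2-c^2)*L2 P1 P2) by (apply Rmult_lt_0_compat; lra).
  destruct (Rlt_or_le 0 lam) as [hl|hl]; [exact hl|].
  exfalso. assert (4*(a^2-c^2)*L2 P1 P2 * lam <= 0).
  { rewrite <- (Rmult_0_r (4*(a^2-c^2)*L2 P1 P2)). apply Rmult_le_compat_l; lra. }
  lra.
Qed.

Lemma part2 (a c lam cc1 ss1 cc2 ss2 cc3 ss3 : R) :
  0 < c -> c < a -> 0 < lam ->
  cc1^2+ss1^2 = 1 -> cc2^2+ss2^2 = 1 -> cc3^2+ss3^2 = 1 ->
  cU cc1 ss1 <> cU cc2 ss2 -> cU cc1 ss1 <> cU cc3 ss3 -> cU cc2 ss2 <> cU cc3 ss3 ->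
  Tan a c lam cc1 ss1 cc2 ss2 = 0 -> Tan a c lam cc1 ss1 cc3 ss3 = 0 -> Tan a c lam cc2 ss2 cc3 ss3 = 0 ->
  cc1+cc2+cc3 = 2*a*c*lam/(a^2*(a^2-c^2)+lam*c^2) /\ ss1+ss2+ss3 = 0 /\
  (a^2*(a^2-c^2)+lam*c^2)*(2*(lam*(c^2+2*a^2)-a^2*(a^2-c^2)) - (a^2*(a^2-c^2)+lam*c^2)) = (2*a*c*lam)^2.
Proof.
  intros cp ca hl U1 U2 U3 N12 N13 N23 T12 T13 T23.
  set (K1 := -2*a*c*lam). set (K2 := a^2*(a^2-c^2)+lam*c^2). set (K3 := lam*(c^2+2*a^2)-a^2*(a^2-c^2)).
  assert (hB : 0 < a^2-c^2) by nra.
  assert (hK2 : 0 < K2).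
  { unfold K2. apply Rplus_lt_0_compat; apply Rmult_lt_0_compat; try lra; apply pow_lt; lra. }
  assert (Q : forall cj sj ck sk, cj^2+sj^2 = 1 -> ck^2+sk^2 = 1 -> Tan a c lam cj sj ck sk = 0 ->
     Qt K1 K2 K3 (cU cj sj) (cU ck sk) = 0%C).
  { intros cj sj ck sk Uj Uk T. rewrite (Q_of_Tan K1 K2 K3 cj sj ck sk Uj Uk).
    unfold Tan in T. fold K1 K2 K3 in T. rewrite T. ring. }
  destruct (sym_relations K1 K2 K3 _ _ _ N12 N13 N23 (Q _ _ _ _ U1 U2 T12) (Q _ _ _ _ U1 U3 T13) (Q _ _ _ _ U2 U3 T23))
    as [R1 R2].
  unfold cU in R1, R2.
  assert (R1x := f_equal fst R1). assert (R2x := f_equal fst R2). assert (R2y := f_equal snd R2).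
  simpl in R1x, R2x, R2y.
  assert (Hs : ss1+ss2+ss3 = 0).
  { apply (Rmult_eq_reg_l K2); [|lra]. lra. }
  assert (Hc : cc1+cc2+cc3 = -K1/K2).
  { unfold Rdiv. apply (Rmult_eq_reg_l K2); [|lra].
    replace (K2 * (- K1 * / K2)) with (-K1) by (field; lra). lra. }
  split; [|split].
  - rewrite Hc. unfold K1. field. lra.
  - exact Hs.
  - rewrite Hc in R1x. fold K2 K3.
    replace (2*a*c*lam) with (-K1) by (unfold K1; ring).
    apply Rminus_diag_uniq.
    transitivity (K2 * (K1 * (- K1 / K2) - 0 * (ss1 + ss2 + ss3) + - K2 + (2 * K3 - 0 * 0))).
    + field. lra.
    + rewrite R1x. ring.
Qed.

Lemma tau_unit (c1 s1 c2 s2 c3 s3 : R) : c1^2+s1^2 = 1 -> c2^2+s2^2 = 1 -> c3^2+s3^2 = 1 ->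
  fst (cU c1 s1 * cU c2 s2 * cU c3 s3)%C ^2 + snd (cU c1 s1 * cU c2 s2 * cU c3 s3)%C ^2 = 1.
Proof.
  intros H1 H2 H3. unfold cU; simpl.
  transitivity ((c1^2+s1^2)*(c2^2+s2^2)*(c3^2+s3^2)). ring. rewrite H1, H2, H3. ring.
Qed.

Lemma Qs_id (c1 s1 c2 s2 c3 s3 : R) : c1^2+s1^2 = 1 -> c2^2+s2^2 = 1 -> c3^2+s3^2 = 1 ->
  qq c2 s2 c3 s3 + qq c3 s3 c1 s1 + qq c1 s1 c2 s2 = 9 - (c1+c2+c3)^2 - (s1+s2+s3)^2.
Proof.
  intros H1 H2 H3. unfold qq.
  transitivity (3*((c1^2+s1^2)+(c2^2+s2^2)+(c3^2+s3^2)) - (c1+c2+c3)^2 - (s1+s2+s3)^2). ring.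
  rewrite H1, H2, H3. ring.
Qed.

Lemma consts (a b c lam : R) : 0 < b -> b < a -> 0 < c -> c^2 = a^2-b^2 -> 0 < lam ->
  (a^2*(a^2-c^2)+lam*c^2)*(2*(lam*(c^2+2*a^2)-a^2*(a^2-c^2)) - (a^2*(a^2-c^2)+lam*c^2)) = (2*a*c*lam)^2 ->
  0 < 9 - (2*a*c*lam/(a^2*(a^2-c^2)+lam*c^2))^2 ->
  let t := 2*a*c*lam/(a^2*(a^2-c^2)+lam*c^2) in
  let m := c*t^2 - 4*a*t + 3*c in
  let d := delta a b in
  c * ((-2*a^2+b^2+2*d)/(2*b^4)) = -3*m/(2*b^2*(9-t^2)) /\
  (-2*d^2+b^4+(2*a^2-b^2)*d)/(2*a*b^4) = -(m*t)/(2*b^2*(9-t^2)) /\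
  0 <= (-2*d^2+b^4+(2*a^2-b^2)*d).
Proof.
  intros hb hab cp c2 hl Hp H9 t m d.
  fold t in H9.
  assert (hD0 : 0 < a^4 - a^2*b^2 + b^4).
  { replace (a^4 - a^2*b^2 + b^4) with ((a^2 - b^2/2)^2 + 3/4*b^4) by field.
    assert (0 < b^4) by (apply pow_lt; lra). assert (0 <= (a^2-b^2/2)^2) by apply pow2_ge_0. lra. }
  assert (hd2 : d^2 = a^4 - a^2*b^2 + b^4) by (unfold d, delta; apply pow2_sqrt; lra).
  assert (hd : 0 < d) by (unfold d, delta; apply sqrt_lt_R0; lra).
  assert (hab2 : 0 < a^2 - b^2) by nra.
  assert (hdb : 0 < d - b^2).
  { assert (d^2 - (b^2)^2 = a^2*(a^2-b^2)) by (rewrite hd2; ring).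
    assert (0 < a^2*(a^2-b^2)) by (apply Rmult_lt_0_compat; nra). nra. }
  assert (HK2 : 0 < a^2*(a^2-c^2)+lam*c^2) by (rewrite c2; nra).
  assert (Q : (a^2-b^2)^2*lam^2 + 2*a^2*b^2*(a^2+b^2)*lam - 3*a^4*b^4 = 0).
  { replace ((2*a*c*lam)^2) with (4*a^2*c^2*lam^2) in Hp by ring.
    rewrite c2 in Hp.
    transitivity ((a ^ 2 * (a ^ 2 - (a ^ 2 - b ^ 2)) + lam * (a ^ 2 - b ^ 2)) *
      (2 * (lam * ((a ^ 2 - b ^ 2) + 2 * a ^ 2) - a ^ 2 * (a ^ 2 - (a ^ 2 - b ^ 2))) -
       (a ^ 2 * (a ^ 2 - (a ^ 2 - b ^ 2)) + lam * (a ^ 2 - b ^ 2))) - 4 * a ^ 2 * (a ^ 2 - b ^ 2) * lam ^ 2).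
    ring. lra. }
  set (lp := a^2*b^2*(2*d - a^2 - b^2)/(a^2-b^2)^2).
  set (lm := a^2*b^2*(-(a^2+b^2) - 2*d)/(a^2-b^2)^2).
  assert (Hf : (a^2-b^2)^2*((lam-lp)*(lam-lm)) = (a^2-b^2)^2*lam^2 + 2*a^2*b^2*(a^2+b^2)*lam - 3*a^4*b^4
     - 4*a^4*b^4*(d^2 - (a^4 - a^2*b^2 + b^4))/(a^2-b^2)^2).
  { unfold lp, lm. field. lra. }
  rewrite Q, hd2 in Hf.
  assert (hlm : 0 < lam - lm).
  { unfold lm. assert (a^2*b^2*(-(a^2+b^2) - 2*d)/(a^2-b^2)^2 < 0).
    { unfold Rdiv. apply Rmult_neg_pos. assert (0 < a^2*b^2) by (apply Rmult_lt_0_compat; nra). nra. apply Rinv_0_lt_compat; nra. } lra. }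
  assert (Hl : lam = lp).
  { assert (Z : (a^2-b^2)^2*((lam-lp)*(lam-lm)) = 0) by (rewrite Hf; field; lra).
    apply Rmult_integral in Z. destruct Z as [Z|Z].
    - exfalso. assert (0 < (a^2-b^2)^2) by (apply pow_lt; lra). lra.
    - apply Rmult_integral in Z. destruct Z as [Z|Z]; lra. }
  set (u := a*(2*d-a^2-b^2)/(d-b^2)).
  assert (HK2' : a^2*(a^2-c^2)+lam*c^2 = 2*a^2*b^2*(d-b^2)/(a^2-b^2)).
  { rewrite c2, Hl. unfold lp. field. lra. }
  assert (Ht : t = u/c).
  { unfold t. rewrite HK2'. unfold u. rewrite Hl. unfold lp.
    apply (Rmult_eq_reg_r c); [|lra].
    transitivity (2*a*c^2*(a ^ 2 * b ^ 2 * (2 * d - a ^ 2 - b ^ 2) / (a ^ 2 - b ^ 2) ^ 2) / (2 * a ^ 2 * b ^ 2 * (d - b ^ 2) / (a ^ 2 - b ^ 2))).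
    - field. repeat split; try lra; nra.
    - rewrite c2. field. repeat split; try lra; nra. }
  assert (H9' : 0 < 9*c^2 - u^2).
  { assert (E : 9*c^2 - u^2 = c^2*(9 - t^2)) by (rewrite Ht; field; lra). rewrite E.
    apply Rmult_lt_0_compat; [nra|lra]. }
  assert (Em : m = (u^2 - 4*a*u + 3*c^2)/c) by (unfold m; rewrite Ht; field; lra).
  assert (KA := Ka_poly a b d hd2). assert (KB := Kb_poly a b d hd2). cbv zeta in KA, KB.
  rewrite c2 in H9'.
  set (Nu := a*(2*d-a^2-b^2)) in *. set (Du := d - b^2) in *.
  assert (hu : u = Nu/Du) by reflexivity.
  assert (Qp : 0 < 9*(a^2-b^2)*Du^2 - Nu^2).
  { assert (E : 9*(a^2-b^2)*Du^2 - Nu^2 = Du^2*(9*(a^2-b^2) - u^2)) by (rewrite hu; field; lra).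
    rewrite E. apply Rmult_lt_0_compat; [nra|lra]. }
  split; [|split].
  - rewrite Em, Ht. 
    transitivity (c * (-3*(u^2 - 4*a*u + 3*(a^2-b^2))/(2*b^2*(9*(a^2-b^2) - u^2)))).
    + f_equal. apply Rminus_diag_uniq.
      transitivity (((-2*a^2+b^2+2*d)*(9*(a^2-b^2)*Du^2 - Nu^2) + 3*b^2*(Nu^2 - 4*a*Nu*Du + 3*(a^2-b^2)*Du^2))
         / (2*b^4*(9*(a^2-b^2)*Du^2 - Nu^2))).
      * rewrite hu. field. repeat split; try lra.
      * rewrite KA. field. split; lra.
    + rewrite <- c2. field. repeat split; try lra.
  - rewrite Em, Ht.
    transitivity (-((u^2 - 4*a*u + 3*(a^2-b^2))*u)/(2*b^2*(9*(a^2-b^2) - u^2))).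
    + apply Rminus_diag_uniq.
      transitivity (((-2*d^2+b^4+(2*a^2-b^2)*d)*Du*(9*(a^2-b^2)*Du^2 - Nu^2) + a*b^2*(Nu^2 - 4*a*Nu*Du + 3*(a^2-b^2)*Du^2)*Nu)
         / (2*a*b^4*Du*(9*(a^2-b^2)*Du^2 - Nu^2))).
      * rewrite hu. field. repeat split; try lra.
      * rewrite KB. field. repeat split; lra.
    + rewrite <- c2. field. repeat split; try lra.
  - assert (X : 0 <= (2*a^2-b^2)*d) by (apply Rmult_le_pos; nra).
    assert (Y : 0 < 2*d^2 - b^4) by (rewrite hd2; nra).
    assert (XY : ((2*a^2-b^2)*d)^2 - (2*d^2-b^4)^2 = a^2*b^4*(a^2-b^2)).
    { replace (((2*a^2-b^2)*d)^2) with ((2*a^2-b^2)^2*d^2) by ring. rewrite hd2. ring. }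
    assert (0 <= a^2*b^4*(a^2-b^2)).
    { apply Rmult_le_pos; [apply Rmult_le_pos|]; nra. }
    nra.
Qed.

Lemma sqeq (x y : R) : 0 <= x -> 0 <= y -> x^2 = y^2 -> x = y.
Proof. intros hx hy E. apply Rsqr_inj; auto. unfold Rsqr. rewrite <- !Rsqr_pow2 in E. exact E. Qed.

Lemma dist_inv (a c rho lam cj sj ck sk : R) : 0 < c -> c < a -> 0 < rho -> 0 < lam ->
  cj^2+sj^2 = 1 -> ck^2+sk^2 = 1 -> 0 < qq cj sj ck sk ->
  4*(a^2-c^2)*lam*L2 (mkP a c cj sj) (mkP a c ck sk) = (a * qq cj sj ck sk * ((a^2-c^2)/(a-c*cj)) * ((a^2-c^2)/(a-c*ck)))^2 ->
  pdist (-c + rho^2*cj/((a^2-c^2)/(a-c*cj)), rho^2*sj/((a^2-c^2)/(a-c*cj)))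
        (-c + rho^2*ck/((a^2-c^2)/(a-c*ck)), rho^2*sk/((a^2-c^2)/(a-c*ck)))
  = rho^2*a/(2*sqrt((a^2-c^2)*lam)) * qq cj sj ck sk.
Proof.
  intros cp ca hr hl Uj Uk hq E.
  assert (hdj := d_pos a c cj sj cp ca Uj). assert (hdk := d_pos a c ck sk cp ca Uk).
  assert (hB : 0 < a^2-c^2) by nra.
  assert (rj : 0 < (a^2-c^2)/(a-c*cj)) by (apply Rdiv_lt_0_compat; lra).
  assert (rk : 0 < (a^2-c^2)/(a-c*ck)) by (apply Rdiv_lt_0_compat; lra).
  rewrite L2_mkP in E.
  set (Rj := (a^2-c^2)/(a-c*cj)) in *. set (Rk := (a^2-c^2)/(a-c*ck)) in *.
  clearbody Rj Rk.
  assert (hs : 0 < sqrt((a^2-c^2)*lam)) by (apply sqrt_lt_R0; nra).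
  assert (hs2 : sqrt((a^2-c^2)*lam)^2 = (a^2-c^2)*lam) by (apply pow2_sqrt; nra).
  apply sqeq.
  - apply pdist_nonneg.
  - apply Rmult_le_pos; [|lra]. unfold Rdiv. apply Rmult_le_pos. nra. left. apply Rinv_0_lt_compat. lra.
  - rewrite (invdist c rho Rj Rk cj sj ck sk ltac:(lra) ltac:(lra) Uj Uk).
    assert (E' : (Rj * cj - Rk * ck) ^ 2 + (Rj * sj - Rk * sk) ^ 2 = (a * qq cj sj ck sk * Rj * Rk)^2 / (4*((a^2-c^2)*lam))).
    { rewrite <- E. field. lra. }
    rewrite E'.
    transitivity (rho^4*a^2*qq cj sj ck sk^2/(4*((a^2-c^2)*lam))).
    + field. repeat split; lra.
    + replace ((rho ^ 2 * a / (2 * sqrt ((a ^ 2 - c ^ 2) * lam)) * qq cj sj ck sk) ^ 2)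
        with (rho^4*a^2*qq cj sj ck sk^2/(4*sqrt((a^2-c^2)*lam)^2)) by (field; lra).
      rewrite hs2. reflexivity.
Qed.

Lemma main_U (a b rho c cc1 ss1 cc2 ss2 cc3 ss3 : R) :
  0 < b -> b < a -> 0 < rho -> c = sqrt (a^2-b^2) ->
  cc1^2+ss1^2 = 1 -> cc2^2+ss2^2 = 1 -> cc3^2+ss3^2 = 1 ->
  three_periodic a b (mkP a c cc1 ss1) (mkP a c cc2 ss2) (mkP a c cc3 ss3) ->
  pdist (incenter (invert (focus1 a b) rho (mkP a c cc1 ss1)) (invert (focus1 a b) rho (mkP a c cc2 ss2))
           (invert (focus1 a b) rho (mkP a c cc3 ss3)))
    (c * (-1 + rho ^ 2 * (-2 * a ^ 2 + b ^ 2 + 2 * delta a b) / (2 * b ^ 4)), 0)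
  = rho ^ 2 * (-2 * delta a b ^ 2 + b ^ 4 + (2 * a ^ 2 - b ^ 2) * delta a b) / (2 * a * b ^ 4).
Proof.
  intros hb hab hrho Hc U1 U2 U3 h3.
  destruct (c_facts a b hb hab) as [cp [c2 ca]]. rewrite <- Hc in cp, c2, ca.
  assert (Hf : focus1 a b = (-c, 0)) by (unfold focus1; rewrite Hc; reflexivity).
  rewrite Hf.
  destruct (part1 a b c cc1 ss1 cc2 ss2 cc3 ss3 hb cp ca c2 U1 U2 U3 h3)
    as [lam [hl [T12 [T13 [T23 [E12 [E13 E23]]]]]]].
  destruct h3 as [_ [_ [_ [Hnc _]]]].
  assert (N12 : mkP a c cc1 ss1 <> mkP a c cc2 ss2) by (intro E; apply Hnc; rewrite E; ring).
  assert (N13 : mkP a c cc1 ss1 <> mkP a c cc3 ss3) by (intro E; apply Hnc; rewrite E; ring).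
  assert (N23 : mkP a c cc2 ss2 <> mkP a c cc3 ss3) by (intro E; apply Hnc; rewrite E; ring).
  destruct (part2 a c lam cc1 ss1 cc2 ss2 cc3 ss3 cp ca hl U1 U2 U3
    (cU_neq _ _ _ _ _ _ N12) (cU_neq _ _ _ _ _ _ N13) (cU_neq _ _ _ _ _ _ N23) T12 T13 T23)
    as [Hsc [Hss Hp]].
  set (t := 2*a*c*lam/(a^2*(a^2-c^2)+lam*c^2)) in *.
  assert (q1p := qq_pos _ _ _ _ _ _ N23). assert (q2p := qq_pos _ _ _ _ _ _ N13).
  assert (q3p := qq_pos _ _ _ _ _ _ N12).
  assert (HQ := Qs_id cc1 ss1 cc2 ss2 cc3 ss3 U1 U2 U3).
  rewrite Hsc, Hss in HQ.
  assert (q2e : qq cc3 ss3 cc1 ss1 = qq cc1 ss1 cc3 ss3) by (unfold qq; ring).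
  rewrite q2e in HQ.
  set (q1 := qq cc2 ss2 cc3 ss3) in *. set (q2 := qq cc1 ss1 cc3 ss3) in *. set (q3 := qq cc1 ss1 cc2 ss2) in *.
  assert (H9 : 0 < 9 - t^2) by lra.
  destruct (consts a b c lam hb hab cp c2 hl Hp H9) as [Ka [Kb Knn]].
  fold t in Ka, Kb.
  rewrite (invert_form a c rho cc1 ss1 cp ca U1), (invert_form a c rho cc2 ss2 cp ca U2), (invert_form a c rho cc3 ss3 cp ca U3).
  set (k := rho^2*a/(2*sqrt((a^2-c^2)*lam))).
  assert (D23 := dist_inv a c rho lam cc2 ss2 cc3 ss3 cp ca hrho hl U2 U3 q1p E23).
  assert (D13 := dist_inv a c rho lam cc1 ss1 cc3 ss3 cp ca hrho hl U1 U3 q2p E13).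
  assert (D12 := dist_inv a c rho lam cc1 ss1 cc2 ss2 cp ca hrho hl U1 U2 q3p E12).
  fold k q1 q2 q3 in D23, D13, D12.
  rewrite pdist_sym in D13.
  assert (hk : 0 < k).
  { unfold k. assert (hB : 0 < a^2-c^2) by nra.
    assert (0 < sqrt((a^2-c^2)*lam)) by (apply sqrt_lt_R0; apply Rmult_lt_0_compat; lra).
    unfold Rdiv. apply Rmult_lt_0_compat. apply Rmult_lt_0_compat; [apply pow_lt; lra|lra]. apply Rinv_0_lt_compat; lra. }
  rewrite (incenter_form c rho k q1 q2 q3 _ _ _ _ _ _ hk ltac:(lra) D23 D13 D12).
  pose proof (W_lemma a c t cc1 ss1 cc2 ss2 cc3 ss3 U1 U2 U3 Hsc Hss) as WL. cbv zeta in WL.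
  destruct WL as [Wx Wy]. fold q1 q2 q3 in Wx, Wy.
  assert (Tu := tau_unit cc1 ss1 cc2 ss2 cc3 ss3 U1 U2 U3).
  remember (fst (cU cc1 ss1 * cU cc2 ss2 * cU cc3 ss3)%C) as tx eqn:Htx.
  remember (snd (cU cc1 ss1 * cU cc2 ss2 * cU cc3 ss3)%C) as ty eqn:Hty.
  remember (delta a b) as d eqn:Hd.
  clearbody q1 q2 q3 t k.
  assert (hd1 := d_pos a c cc1 ss1 cp ca U1). assert (hd2 := d_pos a c cc2 ss2 cp ca U2).
  assert (hd3 := d_pos a c cc3 ss3 cp ca U3).
  assert (hB : a^2 - c^2 = b^2) by lra.
  assert (hb2 : 0 < b^2) by nra.
  assert (hQ : q1+q2+q3 = 9 - t^2) by lra.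
  set (m := c*t^2 - 4*a*t + 3*c) in *. clearbody m.
  assert (EX : (q1 * (- c + rho ^ 2 * cc1 / ((a ^ 2 - c ^ 2) / (a - c * cc1))) +
      q2 * (- c + rho ^ 2 * cc2 / ((a ^ 2 - c ^ 2) / (a - c * cc2))) +
      q3 * (- c + rho ^ 2 * cc3 / ((a ^ 2 - c ^ 2) / (a - c * cc3)))) / (q1 + q2 + q3)
     - c * (-1 + rho ^ 2 * (-2 * a ^ 2 + b ^ 2 + 2 * d) / (2 * b ^ 4))
     = rho^2*m*t*tx/(2*b^2*(9-t^2))).
  { transitivity (rho^2*(2*(q1*cc1*(a-c*cc1) + q2*cc2*(a-c*cc2) + q3*cc3*(a-c*cc3)))/(2*(a^2-c^2)*(q1+q2+q3))
        - rho^2*(c*((-2*a^2+b^2+2*d)/(2*b^4)))).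
    - field. repeat split; lra.
    - rewrite Wx, Ka, hQ, hB. field. split; lra. }
  assert (EY : (q1 * (rho ^ 2 * ss1 / ((a ^ 2 - c ^ 2) / (a - c * cc1))) +
      q2 * (rho ^ 2 * ss2 / ((a ^ 2 - c ^ 2) / (a - c * cc2))) +
      q3 * (rho ^ 2 * ss3 / ((a ^ 2 - c ^ 2) / (a - c * cc3)))) / (q1 + q2 + q3) - 0
     = rho^2*m*t*ty/(2*b^2*(9-t^2))).
  { transitivity (rho^2*(2*(q1*ss1*(a-c*cc1) + q2*ss2*(a-c*cc2) + q3*ss3*(a-c*cc3)))/(2*(a^2-c^2)*(q1+q2+q3))).
    - field. repeat split; lra.
    - rewrite Wy, hQ, hB. field. split; lra. }
  assert (ER : rho ^ 2 * (-2 * d ^ 2 + b ^ 4 + (2 * a ^ 2 - b ^ 2) * d) / (2 * a * b ^ 4)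
     = - (rho^2*m*t/(2*b^2*(9-t^2)))).
  { transitivity (rho^2 * ((-2 * d ^ 2 + b ^ 4 + (2 * a ^ 2 - b ^ 2) * d) / (2 * a * b ^ 4))).
    - field. split; lra.
    - rewrite Kb. field. split; lra. }
  assert (Rnn : 0 <= rho ^ 2 * (-2 * d ^ 2 + b ^ 4 + (2 * a ^ 2 - b ^ 2) * d) / (2 * a * b ^ 4)).
  { unfold Rdiv. apply Rmult_le_pos. apply Rmult_le_pos. apply pow2_ge_0. exact Knn.
    left. apply Rinv_0_lt_compat. apply Rmult_lt_0_compat. lra. apply pow_lt; lra. }
  unfold pdist; cbn [fst snd].
  rewrite EX, EY.
  set (K := rho^2*m*t/(2*b^2*(9-t^2))) in *.
  replace ((rho ^ 2 * m * t * tx / (2 * b ^ 2 * (9 - t ^ 2))) ^ 2 + (rho ^ 2 * m * t * ty / (2 * b ^ 2 * (9 - t ^ 2))) ^ 2)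
    with (K^2*(tx^2+ty^2)) by (unfold K; field; lra).
  rewrite Tu, Rmult_1_r.
  rewrite ER in Rnn |- *.
  replace (K^2) with ((-K)^2) by ring.
  apply sqrt_pow2. exact Rnn.
Qed.

Theorem mainTheorem10 (a b rho : R) (hb : 0 < b) (hab : b < a) (hrho : 0 < rho)
  (P1 P2 P3 : pt) (h3 : three_periodic a b P1 P2 P3) :
  let c := sqrt (a ^ 2 - b ^ 2) in
  let d := delta a b in
  let f1 := focus1 a b in
  let X1 := incenter (invert f1 rho P1) (invert f1 rho P2) (invert f1 rho P3) in
  let C1 := (c * (-1 + rho ^ 2 * (-2 * a ^ 2 + b ^ 2 + 2 * d) / (2 * b ^ 4)), 0) in
  let R1 := rho ^ 2 * (-2 * d ^ 2 + b ^ 4 + (2 * a ^ 2 - b ^ 2) * d) / (2 * a * b ^ 4) in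
  pdist X1 C1 = R1.
Proof.
  cbv zeta.
  pose proof h3 as h3'. destruct h3' as [He1 [He2 [He3 _]]].
  destruct P1 as [x1 y1], P2 as [x2 y2], P3 as [x3 y3].
  destruct (urep a b x1 y1 hb hab He1) as [cc1 [ss1 [U1 E1]]].
  destruct (urep a b x2 y2 hb hab He2) as [cc2 [ss2 [U2 E2]]].
  destruct (urep a b x3 y3 hb hab He3) as [cc3 [ss3 [U3 E3]]].
  rewrite E1, E2, E3 in h3 |- *.
  apply (main_U a b rho (sqrt (a^2-b^2)) cc1 ss1 cc2 ss2 cc3 ss3 hb hab hrho eq_refl U1 U2 U3 h3).
Qed.
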